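(* Let $(E,\mathcal{E},\mu)$ be a $\sigma$-finite measure space and let $f:E\to\mathbb{R}$ be $\mathcal{E}/\mathcal{B}(\mathbb{R})$-measurable with $f(x)\ge 0$ for all $x\in E$ and $K:=\int_E f(x)\,\mu(dx)\in(0,\infty)$. Let $\nu$ be the measure on $(E\times\mathbb{R},\mathcal{E}\otimes\mathcal{B}(\mathbb{R}))$ given by $\nu(C)=\iint_{E\times\mathbb{R}}1_C(x,y)\,\mu(dx)\,dy$, and let $\Gamma[f]=\{(x,y)\in E\times\mathbb{R}: 0\le y\le f(x)\}$. Let $N\in\mathbb{N}$ and let $B_1,\dots,B_N\in\mathcal{E}\otimes\mathcal{B}(\mathbb{R})$ with $B:=\bigcup_{i=1}^N B_i$ satisfy: $\nu(B_i)>0$ for all $i$; $\nu(B_i\cap B_j)=0$ for $i\ne j$; $\nu(\Gamma[f]\setminus B)=0$ and $\nu(B)<\infty$. Define $\Psi:[0,1)\to\{1,\dots,N\}$ by $\Psi(u)=\min\{i\in\{1,\dots,N\}: u<\sum_{j=1}^i \nu(B_j)/\nu(B)\}$, set $B_i[f]:=B_i\cap\Gamma[f]$, and define $$\Lambda:=\{(u,v_1,\dots,v_N,w_1,\dots,w_N)\in[0,1)\times E^N\times\mathbb{R}^N : (v_{\Psi(u)},w_{\Psi(u)})\in B_{\Psi(u)}[f]\}.$$ Let $(\Omega,\mathcal{F},P)$ be a probability space carrying real random variables $U,W_1,\dots,W_N$ and $(E,\mathcal{E})$-valued random variables $V_1,\dots,V_N$ such that, for each $i=1,\dots,N$, $(V_i,W_i)$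 and $U$ are independent, $P((V_i,W_i)\in C)=\nu(C\cap B_i)/\nu(B_i)$ for all $C\in\mathcal{E}\otimes\mathcal{B}(\mathbb{R})$, and $U$ is uniformly distributed on $[0,1)$ (i.e. $P(U\in D)=\int_D 1_{[0,1)}(u)\,du$ for $D\in\mathcal{B}(\mathbb{R})$). Let $Z:=(U,V_1,\dots,V_N,W_1,\dots,W_N)$. Then for every $A\in\mathcal{E}$, $$P\big(V_{\Psi(U)}\in A,\ Z\in\Lambda\big)=\frac{1}{\nu(B)}\int_A f(x)\,\mu(dx).$$
   Context: $\mathcal{B}(\mathbb{R})$ denotes the Borel $\sigma$-algebra of $\mathbb{R}$ and $\mathcal{E}\otimes\mathcal{B}(\mathbb{R})$ the product $\sigma$-algebra. $V_{\Psi(U)}$ denotes the random variable $\omega\mapsto V_{\Psi(U(\omega))}(\omega)$ (on the event $U\in[0,1)$, which has probability one). *)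

(* Defs.v *)
From HB Require Import structures.
From mathcomp Require Import all_boot all_order all_algebra.
From mathcomp Require Import all_classical all_reals all_analysis.
Set Implicit Arguments. Unset Strict Implicit. Unset Printing Implicit Defensive.
Import Order.TTheory GRing.Theory Num.Theory.
Local Open Scope classical_set_scope.
Local Open Scope ring_scope.

Definition Gamma {E : Type} {R : realType} (f : E -> R) : set (E * R) :=
  [set z | 0 <= z.2 <= f z.1].

(* Psi u = min {i < N | u < sum_{j <= i} r j}  (0-indexed; returns N if no such i).
   Here r j will be nu(B_j)/nu(B). *)
Definition Psi {R : realType} (N : nat) (r : nat -> R) (u : R) : nat :=
  find (fun i => u < \sum_(0 <= j < i.+1) r j) (iota 0 N).

Definition Lambda {E : Type} {R : realType} (N : nat) (r : nat -> R)
  (B : nat -> set (E * R)) (f : E -> R) : set (R * (nat -> E) * (nat -> R)) :=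
  [set z | let: (u, v, w) := z in
     `[0, 1[%classic u /\
     (B (Psi N r u) `&` Gamma f) (v (Psi N r u), w (Psi N r u))].

Definition indep_rv {dO d1 d2} {Omega : measurableType dO}
  {T1 : measurableType d1} {T2 : measurableType d2} {R : realType}
  (P : probability Omega R) (X : Omega -> T1) (Y : Omega -> T2) : Prop :=
  forall (C : set T1) (D : set T2), measurable C -> measurable D ->
    P (X @^-1` C `&` Y @^-1` D) = (P (X @^-1` C) * P (Y @^-1` D))%E.

(* Main.v *)
From HB Require Import structures.
From mathcomp Require Import all_boot all_order all_algebra.
From mathcomp Require Import all_classical all_reals all_analysis.
Require Import Defs.
From mathcomp Require Import ring.
Import Order.TTheory GRing.Theory Num.Theory.
Local Open Scope classical_set_scope.
Local Open Scope ring_scope.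
Set Implicit Arguments. Unset Strict Implicit.

Lemma null_add d (T : measurableType d) (R : realType)
  (m : {measure set T -> \bar R}) (F : nat -> set T) n :
  (forall i, (i < n)%N -> measurable (F i)) ->
  (forall i j, (i < n)%N -> (j < n)%N -> i <> j -> m (F i `&` F j) = 0%E) ->
  m (\bigcup_(i in `I_n) F i) = (\sum_(i < n) m (F i))%E.
Proof.
elim: n => [|n IH] mF F0.
  by rewrite bigcup_mkord !big_ord0 measure0.
have mX : measurable (\bigcup_(i in `I_n) F i).
  by apply: bigcup_measurable => k /= kn; apply: mF; exact: ltnW.
have mY : measurable (F n) by apply: mF.
rewrite bigcup_mkord big_ord_recr /= -bigcup_mkord.
rewrite big_ord_recr /= -IH; first last.
- by move=> i j ? ? ?; apply: F0 => //; exact: ltnW.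
- by move=> i ?; apply: mF; exact: ltnW.
set X := \bigcup_(i in `I_n) F i.
have -> : X `|` F n = X `|` (F n `\` X).
  apply/seteqP; split => x; first by case=> ?; [left|]; [|have [?|?] := pselect (X x); [left|right]].
  by case=> [?|[]]; [left|right].
rewrite measureU //; [|exact: measurableD|by rewrite setDIK].
congr (_ + _)%E.
rewrite [in RHS](measureDI m mY mX) -/X.
rewrite -[LHS]adde0; congr (_ + _)%E; apply/esym.
apply/eqP; rewrite eq_le measure_ge0 andbT.
pose G k := F n `&` F k.
apply: (le_trans (content_subadditive m (F := G) (n := n) _ _ _)).
- by move=> k /= kn; apply: measurableI => //; apply: mF; exact: ltnW.
- exact: measurableI.
- by rewrite -bigcup_mkord => x [Fx [i ii Fix]]; exists i.
rewrite big1 // => i _; apply: F0 => //; first by rewrite ltnS ltnW.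
by move=> h; move: (ltn_ord i); rewrite -h ltnn.
Qed.
Lemma Gamma_measurable (R : realType) d (E : measurableType d) (f : E -> R) :
  measurable_fun setT f -> measurable (Gamma f).
Proof.
move=> mf.
have -> : Gamma f = (setT `&` (snd @^-1` `[0, +oo[)) `&`
   (setT `&` ((fun z : E * R => f z.1 - z.2) @^-1` `[0, +oo[)).
  apply/seteqP; split => -[x y] /=; rewrite /Gamma /= !in_itv /= !andbT.
    by move/andP => [-> h]; split => //; rewrite subr_ge0.
  by move=> [[_ ->] [_]]; rewrite subr_ge0.
apply: measurableI.
  by apply: measurable_snd => //; exact: measurable_itv.
have mg : measurable_fun setT (fun z : E * R => f z.1 - z.2).
  exact: (measurable_realfun.measurable_funB (measurableT_comp mf measurable_fst) measurable_snd).
by apply: mg => //; exact: measurable_itv.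
Qed.

Lemma nu_Gamma (R : realType) d (E : measurableType d) (mu : {measure set E -> \bar R}) (f : E -> R) (A : set E) :
  measurable_fun setT f -> (forall x, 0 <= f x) -> measurable A ->
  (mu \x (@lebesgue_measure R))%E (Gamma f `&` (A `*` setT)) = (\int[mu]_(x in A) (f x)%:E)%E.
Proof.
move=> mf f0 mA.
rewrite integral_mkcond /product_measure1; apply: eq_integral => x _.
rewrite /patch /=; case: ifPn => xA.
  have -> : xsection (Gamma f `&` A `*` setT) x = `[0, f x]%classic.
    apply/seteqP; split => y; rewrite /xsection /= inE /Gamma /= in_itv /=.
      by case.
    by move=> h; split => //; split => //; rewrite inE in xA.
  rewrite lebesgue_measure_itv /= lte_fin.
  case: ltP => h; first by rewrite oppr0 adde0.
  by apply/eqP; rewrite eq_sym eqe eq_le h f0.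
have -> : xsection (Gamma f `&` A `*` setT) x = set0.
  apply/seteqP; split => y; rewrite /xsection /= inE //.
  by move=> [_ [/= Ax _]]; move/negP: xA; rewrite inE.
by rewrite measure0.
Qed.
Definition Ssum {R : realType} (r : nat -> R) k := \sum_(0 <= j < k) r j.

Lemma Ssum_mono (R : realType) (r : nat -> R) a b :
  (forall j, 0 <= r j) -> (a <= b)%N -> Ssum r a <= Ssum r b.
Proof.
move=> r0 ab; rewrite /Ssum [X in _ <= X](big_cat_nat _ (n := a)) //= lerDl.
by apply: sumr_ge0 => j _.
Qed.

Lemma SsumS (R : realType) (r : nat -> R) k : Ssum r k.+1 = Ssum r k + r k.
Proof. by rewrite /Ssum big_nat_recr. Qed.

Lemma Psi_spec (R : realType) N (r : nat -> R) u i :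
  (forall j, 0 <= r j) -> 0 <= u -> (i < N)%N ->
  (Psi N r u = i) <-> (Ssum r i <= u < Ssum r i.+1).
Proof.
move=> r0 u0 iN; rewrite /Psi.
set p := (fun i0 : nat => u < \sum_(0 <= j < i0.+1) r j).
split.
  move=> fi.
  have hp : has p (iota 0 N) by rewrite has_find size_iota fi.
  have := nth_find 0%N hp; rewrite fi nth_iota // add0n /p => ->.
  rewrite andbT; case: i iN fi => [|k] iN fi.
    by rewrite /Ssum big_geq.
  have := @before_find _ 0%N p (iota 0 N) k; rewrite fi ltnSn nth_iota; last exact: ltnW.
  by rewrite add0n /p => /(_ isT) /negbT; rewrite -leNgt.
move=> /andP[h1 h2].
have hp : has p (iota 0 N) by apply/hasP; exists i; rewrite ?mem_iota //= add0n.
have := has_find p (iota 0 N); rewrite hp size_iota => /esym fN.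
case: (ltngtP (find p (iota 0 N)) i) => // c.
  have := nth_find 0%N hp; rewrite nth_iota // add0n /p => h.
  have : Ssum r (find p (iota 0 N)).+1 <= Ssum r i by apply: Ssum_mono.
  by rewrite /Ssum => h3; move: (lt_le_trans h (le_trans h3 h1)); rewrite ltxx.
by have := before_find 0%N c; rewrite nth_iota // add0n /p h2.
Qed.

Section S.
Context (R : realType) d (E : measurableType d) (mu : {measure set E -> \bar R}) (hmu : sigma_finite setT mu).
Definition mu0 : set E -> \bar R := mu.
HB.instance Definition _ := Measure.on mu0.
HB.instance Definition _ := @Measure_isSigmaFinite.Build _ _ _ mu0 hmu.
Lemma nuE (X : set (E * R)) : measurable X -> (mu \x^ (@lebesgue_measure R))%E X = (mu \x (@lebesgue_measure R))%E X.
Proof. move=> mX. 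
change ((mu0 \x^ (@lebesgue_measure R))%E X = (mu0 \x (@lebesgue_measure R))%E X).
apply/esym/product_measure_unique => // A B mA mB.
exact: (product_measure2E _ _ mA mB). Qed.
End S.

Unset Implicit Arguments.
Theorem lemma2p1 (R : realType) (d : measure_display) (E : measurableType d)
  (mu : {measure set E -> \bar R}) (f : E -> R)
  (dO : measure_display) (Omega : measurableType dO) (P : probability Omega R)
  (N : nat) (B : nat -> set (E * R))
  (U : Omega -> R) (V : nat -> Omega -> E) (W : nat -> Omega -> R) :
  sigma_finite setT mu ->
  measurable_fun setT f ->
  (forall x, 0 <= f x) ->
  (0 < \int[mu]_x (f x)%:E)%E ->
  (\int[mu]_x (f x)%:E < +oo)%E ->
  let nu := (mu \x^ (@lebesgue_measure R))%E in
  let BU := \bigcup_(i in `I_N) B i in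
  (forall i, (i < N)%N -> measurable (B i)) ->
  (forall i, (i < N)%N -> (0 < nu (B i))%E) ->
  (forall i j, (i < N)%N -> (j < N)%N -> i <> j -> nu (B i `&` B j) = 0%E) ->
  nu (Gamma f `\` BU) = 0%E ->
  (nu BU < +oo)%E ->
  let r := fun j => fine (nu (B j)) / fine (nu BU) in
  measurable_fun setT U ->
  (forall i, (i < N)%N -> measurable_fun setT (V i)) ->
  (forall i, (i < N)%N -> measurable_fun setT (W i)) ->
  (forall i, (i < N)%N ->
     indep_rv P (fun w => (V i w, W i w)) U) ->
  (forall i, (i < N)%N -> forall C : set (E * R), measurable C ->
     P [set w | C (V i w, W i w)] =
       (nu (C `&` B i) * ((fine (nu (B i)))^-1)%:E)%E) ->
  (forall D : set R, measurable D ->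
     P (U @^-1` D) =
       (\int[@lebesgue_measure R]_(u in D) (\1_(`[0%R, 1%R[ : set R) u)%:E)%E) ->
  let Z := fun w => (U w, fun i => V i w, fun i => W i w) in
  forall A : set E, measurable A ->
    P [set w | A (V (Psi N r (U w)) w) /\ Lambda N r B f (Z w)] =
      (((fine (nu BU))^-1)%:E * \int[mu]_(x in A) (f x)%:E)%E.
Proof.
move=> sfmu mf f0 intpos intfin nu BU mB nuBpos nuBB nuGB nuBUfin r mU mV mW
  indep PV PU Z A mA.
have nuE' : forall X, measurable X -> nu X = (mu \x (@lebesgue_measure R))%E X.
  by move=> X mX; exact: nuE sfmu X mX.
have mBU : measurable BU by apply: bigcup_measurable.
have mG : measurable (Gamma f) := Gamma_measurable mf.
pose G := Gamma f `&` (A `*` setT).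
have mGA : measurable G by apply: measurableI => //; apply: measurableX.
pose C i := G `&` B i.
have mC : forall i, (i < N)%N -> measurable (C i).
  by move=> i iN; apply: measurableI => //; apply: mB.
have nu_ge0 : forall X, (0 <= nu X)%E.
  by move=> X; apply: integral_ge0 => y _.
have hGB : forall X, measurable X -> X `<=` Gamma f ->
    (mu \x (@lebesgue_measure R))%E X = (mu \x (@lebesgue_measure R))%E (X `&` BU).
  move=> X mX XG; rewrite (measureDI (mu \x (@lebesgue_measure R))%E mX mBU).
  rewrite -[RHS]add0e; congr (_ + _)%E.
  apply/eqP; rewrite eq_le measure_ge0 andbT -nuGB nuE'; last exact: measurableD.
  by apply: le_measure; rewrite ?inE; [exact: measurableD|exact: measurableD|
    move=> z [/XG ? ?]; split].
have le_BU : forall X, measurable X -> X `<=` BU -> (nu X <= nu BU)%E.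
  by move=> X mX XB; rewrite !nuE' //; apply: le_measure; rewrite ?inE.
have fin_sub : forall X, measurable X -> X `<=` BU -> nu X = (fine (nu X))%:E.
  move=> X mX XB; rewrite fineK // ge0_fin_numE //.
  exact: le_lt_trans (le_BU X mX XB) nuBUfin.
set bu := fine (nu BU).
have hbu : nu BU = bu%:E by rewrite fineK // ge0_fin_numE.
have BsubU : forall i, (i < N)%N -> B i `<=` BU by move=> i iN z Bz; exists i.
have hB : forall i, (i < N)%N -> nu (B i) = (fine (nu (B i)))%:E.
  by move=> i iN; apply: fin_sub; [exact: mB|exact: BsubU].
have bpos : forall i, (i < N)%N -> 0 < fine (nu (B i)).
  by move=> i iN; have := nuBpos i iN; rewrite hB // lte_fin.
have hBU : nu BU = (\sum_(i < N) nu (B i))%E.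
  rewrite nuE' // null_add //; last first.
    move=> i j iN jN ij.
    have mij : measurable (B i `&` B j) by apply: measurableI; apply: mB.
    by rewrite -(nuBB i j) // nuE'.
  by apply: eq_bigr => i _; rewrite nuE' //; apply: mB.
have hbusum : bu = \sum_(i < N) fine (nu (B i)).
  apply: EFin_inj; rewrite -hbu hBU -sumEFin.
  by apply: eq_bigr => i _; rewrite -hB.
have nuGamma : nu (Gamma f) = (\int[mu]_x (f x)%:E)%E.
  by rewrite nuE' // -[in LHS](setIT (Gamma f)) -setXTT nu_Gamma.
have bu_pos : 0 < bu.
  rewrite -lte_fin -hbu; apply: (lt_le_trans intpos); rewrite -nuGamma.
  rewrite !nuE' // hGB //; apply: le_measure; rewrite ?inE //.
  exact: measurableI.
have r0 : forall j, 0 <= r j.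
  by move=> j; apply: divr_ge0; apply: fine_ge0.
have SN : Ssum r N = 1.
  rewrite /Ssum big_mkord /r -mulr_suml -/bu -hbusum divff //.
  by rewrite gt_eqF.
have S0 : forall k, 0 <= Ssum r k.
  by move=> k; rewrite /Ssum; apply: sumr_ge0 => j _.
have S1 : forall k, (k <= N)%N -> Ssum r k <= 1.
  by move=> k kN; rewrite -SN; apply: Ssum_mono.
have NP : (0 < N)%N.
  rewrite lt0n; apply/negP => /eqP N0; move: SN.
  by rewrite N0 /Ssum big_geq // => /esym /eqP; rewrite oner_eq0.
have PsiN : forall u, 0 <= u < 1 -> (Psi N r u < N)%N.
  move=> u /andP[u0 u1]; rewrite /Psi -[X in (_ < X)%N](size_iota 0 N) -has_find.
  apply/hasP; exists N.-1; first by rewrite mem_iota add0n prednK ?leqnn.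
  by rewrite prednK // -/(Ssum r N) SN.
pose X i := fun w => (V i w, W i w).
pose I i := `[Ssum r i, Ssum r i.+1[%classic.
pose ev i := X i @^-1` C i `&` U @^-1` I i.
have Eev : [set w | A (V (Psi N r (U w)) w) /\ Lambda N r B f (Z w)] =
    \bigcup_(i in `I_N) ev i.
  apply/seteqP; split => w /=.
    move=> [Aw [Uw [Bw Gw]]].

    move: Uw; rewrite in_itv /= => Uw.
    have U0 : 0 <= U w by case/andP: Uw.
    have iN := PsiN _ Uw.
    have /(Psi_spec r0 U0 iN) Hs : Psi N r (U w) = Psi N r (U w) by [].
    exists (Psi N r (U w)) => //.
  move=> [i iN [[[Gi [Ai _]] Bi] Ui]].
  move: Ui; rewrite /= in_itv /= => Ui.
  have U0 : 0 <= U w by case/andP: Ui => h _; exact: le_trans (S0 i) h.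
  have -> : Psi N r (U w) = i by apply/(Psi_spec r0 U0 iN).
  split => //; split => //; rewrite U0 /=.
  by case/andP: Ui => _ h; exact: lt_le_trans h (S1 _ iN).
have mX : forall i, (i < N)%N -> measurable_fun setT (X i).
  by move=> i iN; exact: measurable_fun_pair (mV i iN) (mW i iN).
have mI : forall i, measurable (I i) by move=> i; exact: measurable_itv.
have mev : forall i, (i < N)%N -> measurable (ev i).
  move=> i iN; apply: measurableI.
    by rewrite -[Y in measurable Y]setTI; apply: mX => //; exact: mC.
  by rewrite -[Y in measurable Y]setTI; apply: mU.
have ev_disj : forall i j, (i < N)%N -> (j < N)%N -> i <> j -> ev i `&` ev j = set0.
  move=> i j iN jN ij; apply/seteqP; split => w // [[_ Ui] [_ Uj]].
  have U0 : 0 <= U w by case/andP: Ui => h _; exact: le_trans (S0 i) h.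
  apply: ij; have <- := (Psi_spec r0 U0 iN).2 Ui; exact: (Psi_spec r0 U0 jN).2 Uj.
rewrite Eev null_add //; last by move=> i j iN jN ij; rewrite ev_disj // measure0.
have hC : forall i, (i < N)%N -> nu (C i) = (fine (nu (C i)))%:E.
  move=> i iN; apply: fin_sub; first exact: mC.
  by move=> z [_ Bz]; exists i.
have Pev : forall i, (i < N)%N -> P (ev i) = (fine (nu (C i)) / bu)%:E.
  move=> i iN; rewrite /ev (indep i iN (C i) (I i) (mC i iN) (mI i)).
  rewrite (_ : P (X i @^-1` C i) = (nu (C i `&` B i) * ((fine (nu (B i)))^-1)%:E)%E); last exact: PV i iN (C i) (mC i iN).
  rewrite PU // integral_indic //; last exact: measurable_itv.
  rewrite (@setIidr _ `[0%R, 1%R[%classic (I i)); last first.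
    move=> u; rewrite /I /= !in_itv /= => /andP[h1 h2].
    by rewrite (le_trans (S0 i) h1) (lt_le_trans h2 (S1 _ iN)).
  have ri : 0 < r i by rewrite /r divr_gt0 // bpos.
  have hl : lebesgue_measure (I i) = (r i)%:E.
    rewrite /I lebesgue_measure_itv /= lte_fin SsumS ltrDl ri /= -EFinD.
    by rewrite addrAC subrr add0r.
  transitivity (nu (C i `&` B i) * ((fine (nu (B i)))^-1)%:E * (r i)%:E)%E.
    by rewrite -hl.
  have -> : C i `&` B i = C i by rewrite /C -setIA setIid.
  rewrite hC // -!EFinM /r -/bu; congr EFin.
  have := bpos i iN; rewrite lt0r => /andP[bn0 _].
  by field; rewrite bn0 gt_eqF.
rewrite (eq_bigr (fun i : 'I_N => (fine (nu (C i)) / bu)%:E)); last first.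
  by move=> i _; exact: Pev.
rewrite sumEFin -mulr_suml.
have hint : (\int[mu]_(x in A) (f x)%:E)%E = (\sum_(i < N) fine (nu (C i)))%:E.
  rewrite -nu_Gamma // hGB //.
  rewrite /BU setI_bigcupr null_add //.
  - rewrite -sumEFin; apply: eq_bigr => i _.
    by rewrite -hC // nuE' //; exact: mC.
  - move=> i j iN jN ij; apply/eqP; rewrite eq_le measure_ge0 andbT.
    rewrite -(nuBB i j iN jN ij) nuE'; last by apply: measurableI; exact: mB.
    apply: le_measure; rewrite ?inE.
    + by apply: measurableI; apply: measurableI => //; exact: mB.
    + by apply: measurableI; exact: mB.
    + by move=> z [[_ ?] [_ ?]].
by rewrite hint -EFinM mulrC.
Qed.
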